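(* Let $N$ be the five-point space with points $a,U,x,V,b$ whose open sets are exactly the subsets $S$ such that ($a\in S\Rightarrow U\in S$), ($x\in S\Rightarrow U,V\in S$) and ($b\in S\Rightarrow V\in S$). Let $M$ be the three-point space with points $a,w,b$ and open sets $\emptyset,\{w\},\{w,a\},\{w,b\},\{a,w,b\}$, and let $n:N\to M$ send $a\mapsto a$, $b\mapsto b$ and $U,x,V\mapsto w$. A topological space $X$ is normal (any two disjoint closed subsets have disjoint open neighbourhoods) iff $(\emptyset\to X)\rightthreetimes n$.
   Context: For morphisms $f:A\to B$ and $g:X\to Y$ in a category, write $f\rightthreetimes g$ (''$f$ has the left lifting property with respect to $g$'') if for all morphisms $i:A\to X$, $j:B\to Y$ with $g\circ i=j\circ f$ there exists a morphism $h:B\to X$ with $h\circ f=i$ and $g\circ h=j$. ''Normal'' does not include any $T_1$ assumption. *)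

(* Defs.v *)
From Stdlib Require Import Classical.

Record TopSpace := {
  carrier :> Type;
  open : (carrier -> Prop) -> Prop;
  open_full : open (fun _ => True);
  open_inter : forall S T, open S -> open T -> open (fun x => S x /\ T x);
  open_union : forall F : (carrier -> Prop) -> Prop,
      (forall S, F S -> open S) -> open (fun x => exists S, F S /\ S x)
}.

Arguments open {t} _.

Record cmap (X Y : TopSpace) := {
  cfun :> X -> Y;
  ccont : forall S : Y -> Prop, open S -> open (fun x => S (cfun x))
}.
Arguments cfun {X Y} _ _.

Definition llp {A B X Y : TopSpace} (f : cmap A B) (g : cmap X Y) : Prop :=
  forall (i : cmap A X) (j : cmap B Y),
    (forall z, g (i z) = j (f z)) ->
    exists h : cmap B X, (forall z, h (f z) = i z) /\ (forall y, g (h y) = j y).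

Definition closed {X : TopSpace} (C : X -> Prop) : Prop := open (fun x => ~ C x).

(** Normal space (no T1 assumption). *)
Definition normal (X : TopSpace) : Prop :=
  forall C D : X -> Prop, closed C -> closed D -> (forall x, C x -> D x -> False) ->
  exists U V : X -> Prop, open U /\ open V /\ (forall x, C x -> U x) /\
    (forall x, D x -> V x) /\ (forall x, U x -> V x -> False).

Definition empty_space : TopSpace.
Proof.
  refine {| carrier := Empty_set; open := fun _ => True |}; auto.
Defined.

Definition from_empty (X : TopSpace) : cmap empty_space X.
Proof.
  refine {| cfun := fun e : empty_space => match e : Empty_set with end |}.
  intros; exact I.
Defined.

Inductive Npt := Na | NU | Nx | NV | Nb.

Definition Nopen (S : Npt -> Prop) : Prop :=
  (S Na -> S NU) /\ (S Nx -> S NU /\ S NV) /\ (S Nb -> S NV).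

Definition Nspace : TopSpace.
Proof.
  refine {| carrier := Npt; open := Nopen |}; unfold Nopen.
  - tauto.
  - intros S T HS HT; tauto.
  - intros F HF; split; [|split].
    + intros [S [FS HS]]; destruct (HF S FS) as [h1 [h2 h3]]; exists S; auto.
    + intros [S [FS HS]]; destruct (HF S FS) as [h1 [h2 h3]];
        split; exists S; split; auto; apply h2; auto.
    + intros [S [FS HS]]; destruct (HF S FS) as [h1 [h2 h3]]; exists S; auto.
Defined.

Inductive Mpt := Ma | Mw | Mb.

Definition Mopen (S : Mpt -> Prop) : Prop :=
  (forall p, ~ S p) \/
  (forall p, S p <-> p = Mw) \/
  (forall p, S p <-> p = Mw \/ p = Ma) \/
  (forall p, S p <-> p = Mw \/ p = Mb) \/
  (forall p, S p).

Lemma Mopen_iff S : Mopen S <-> ((S Ma -> S Mw) /\ (S Mb -> S Mw)).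
Proof.
  split.
  - intros [H|[H|[H|[H|H]]]].
    + split; intro h; destruct (H _ h).
    + split; intro h; apply H in h; discriminate.
    + split; intro h; apply H; auto; apply H in h; destruct h; discriminate.
    + split; intro h; apply H; auto; apply H in h; destruct h; discriminate.
    + split; intros; apply H.
  - intros [h1 h2].
    destruct (classic (S Mw)) as [w|w];
    destruct (classic (S Ma)) as [a|a];
    destruct (classic (S Mb)) as [b|b]; try tauto.
    + right; right; right; right; intros []; auto.
    + right; right; left; intros []; split; intro; try discriminate; auto;
        try tauto; destruct H; discriminate.
    + right; right; right; left; intros []; split; intro; try discriminate; auto;
        try tauto; destruct H; discriminate.
    + right; left; intros []; split; intro; try discriminate; auto; tauto.
    + left; intros []; auto.
Qed.

Definition Mspace : TopSpace.
Proof.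
  refine {| carrier := Mpt; open := Mopen |}.
  - apply Mopen_iff; tauto.
  - intros S T HS HT; apply Mopen_iff; apply Mopen_iff in HS, HT; tauto.
  - intros F HF; apply Mopen_iff; split; intros [S [FS HS]]; exists S; split; auto;
      destruct (proj1 (Mopen_iff S) (HF S FS)); auto.
Defined.

Definition nfun (p : Npt) : Mpt :=
  match p with Na => Ma | Nb => Mb | _ => Mw end.

Definition nmap : cmap Nspace Mspace.
Proof.
  refine {| cfun := (nfun : Nspace -> Mspace) |}.
  intros S HS. simpl in *. apply Mopen_iff in HS. unfold Nopen; simpl; tauto.
Defined.

(* Main.v *)
Require Import Defs.
From Stdlib Require Import Classical ClassicalEpsilon FunctionalExtensionality PropExtensionality.

Lemma open_ext (X : TopSpace) (S T : X -> Prop) :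
  (forall x, S x <-> T x) -> open S -> open T.
Proof.
  intros H HS. assert (S = T) as E.
  { apply functional_extensionality; intro; apply propositional_extensionality; auto. }
  subst; auto.
Qed.

Lemma open_empty (X : TopSpace) : open (fun _ : X => False).
Proof.
  eapply open_ext; [|apply (open_union X (fun _ => False)); intros _ []].
  intros x; simpl; split; [intros [S [[] _]] | intros []].
Qed.

Lemma open_cand (X : TopSpace) (c : Prop) (S : X -> Prop) :
  open S -> open (fun x => c /\ S x).
Proof.
  intros HS; destruct (classic c) as [h|h].
  - eapply open_ext; [|exact HS]; intros; tauto.
  - eapply open_ext; [|apply open_empty]; intros; simpl; tauto.
Qed.

Lemma open_or (X : TopSpace) (S T : X -> Prop) :
  open S -> open T -> open (fun x => S x \/ T x).
Proof.
  intros HS HT.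
  eapply open_ext; [|apply (open_union X (fun R => R = S \/ R = T));
    intros R [->| ->]; auto].
  intros x; split.
  - intros [R [[->| ->] h]]; auto.
  - intros [h|h]; [exists S | exists T]; auto.
Qed.

Theorem claim1 (X : TopSpace) : normal X <-> llp (from_empty X) nmap.
Proof.
  split.
  - intros Hn i j _.
    set (A := fun z => j z = Ma). set (B := fun z => j z = Mb).
    assert (cA : closed A).
    { unfold closed.
      eapply open_ext; [|apply (ccont _ _ j (fun p => p = Mw \/ p = Mb))].
      - intros x; unfold A; destruct (j x); split; intros; try tauto;
          try discriminate; try (destruct H; discriminate); auto.
      - change (Mopen (fun p => p = Mw \/ p = Mb)); apply Mopen_iff; split; intros; auto.
        }
    assert (cB : closed B).
    { unfold closed.
      eapply open_ext; [|apply (ccont _ _ j (fun p => p = Mw \/ p = Ma))].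
      - intros x; unfold B; destruct (j x); split; intros; try tauto;
          try discriminate; try (destruct H; discriminate); auto.
      - change (Mopen (fun p => p = Mw \/ p = Ma)); apply Mopen_iff; split; intros; auto.
        }
    destruct (Hn A B cA cB) as [U [V [oU [oV [AU [BV UV]]]]]].
    { unfold A, B; intros x -> ; discriminate. }
    set (hf := fun z => if excluded_middle_informative (A z) then Na
      else if excluded_middle_informative (B z) then Nb
      else if excluded_middle_informative (U z) then NU
      else if excluded_middle_informative (V z) then NV else Nx).
    assert (hc : forall S : Nspace -> Prop, open S -> open (fun z => S (hf z))).
    { intros S HS. change (Nopen S) in HS. destruct HS as [h1 [h2 h3]].
      eapply open_ext with (S := fun z =>
        ((S NU /\ (U z /\ ~ A z)) \/ (S NV /\ (V z /\ ~ B z))) \/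
        ((S Na /\ U z) \/ (S Nb /\ V z)) \/ (S Nx /\ (~ A z /\ ~ B z))).
      - intros z; unfold hf.
        destruct (excluded_middle_informative (A z)) as [a|a];
        destruct (excluded_middle_informative (B z)) as [b|b];
        destruct (excluded_middle_informative (U z)) as [u|u];
        destruct (excluded_middle_informative (V z)) as [v|v];
        pose proof (AU z); pose proof (BV z); pose proof (UV z);
        split; intros; try tauto; firstorder.
      - repeat apply open_or; apply open_cand; auto;
          apply open_inter; auto. }
    exists (Build_cmap X Nspace hf hc). split.
    + intros [].
    + intros y; simpl; unfold hf.
      destruct (excluded_middle_informative (A y)) as [a|a]; [exact (eq_sym a)|].
      destruct (excluded_middle_informative (B y)) as [b|b]; [exact (eq_sym b)|].
      unfold A, B in *.
      assert (j y = Mw) as ->. { destruct (j y); tauto. }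
      destruct (excluded_middle_informative (U y));
      destruct (excluded_middle_informative (V y)); reflexivity.
  - intros Hl C D cC cD CD.
    set (jf := fun z => if excluded_middle_informative (C z) then Ma
      else if excluded_middle_informative (D z) then Mb else Mw).
    assert (jc : forall S : Mspace -> Prop, open S -> open (fun z => S (jf z))).
    { intros S HS. change (Mopen S) in HS. apply Mopen_iff in HS. destruct HS as [h1 h2].
      eapply open_ext with (S := fun z =>
        (S Mw /\ (~ C z /\ ~ D z)) \/ ((S Ma /\ ~ D z) \/ (S Mb /\ ~ C z))).
      - intros z; unfold jf.
        destruct (excluded_middle_informative (C z)) as [c|c];
        destruct (excluded_middle_informative (D z)) as [d|d];
        pose proof (CD z); split; intros; tauto.
      - repeat apply open_or; apply open_cand; auto; apply open_inter; auto. }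
    destruct (Hl (from_empty Nspace) (Build_cmap X Mspace jf jc)) as [h [_ Hh]].
    { intros []. }
    exists (fun z => h z = Na \/ h z = NU), (fun z => h z = Nb \/ h z = NV).
    simpl in Hh.
    split; [|split; [|split; [|split]]].
    + apply (ccont _ _ h (fun p => p = Na \/ p = NU)).
      change (Nopen (fun p => p = Na \/ p = NU)); unfold Nopen;
        intuition (try discriminate; auto).
    + apply (ccont _ _ h (fun p => p = Nb \/ p = NV)).
      change (Nopen (fun p => p = Nb \/ p = NV)); unfold Nopen;
        intuition (try discriminate; auto).
    + intros x c; left. specialize (Hh x); unfold jf in Hh.
      destruct (excluded_middle_informative (C x)); [|tauto].
      destruct (h x); simpl in Hh; try discriminate; auto.
    + intros x d; left. specialize (Hh x); unfold jf in Hh.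
      destruct (excluded_middle_informative (C x)); [exfalso; eauto|].
      destruct (excluded_middle_informative (D x)); [|tauto].
      destruct (h x); simpl in Hh; try discriminate; auto.
    + intros x [e|e] [e'|e']; rewrite e in e'; discriminate.
Qed.
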